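(* Let $\lambda$ be a nonzero real number. For every integer $m\ge 0$, as an identity of power series in $x$ (equivalently for $|x|<1$), $$\sum_{k=0}^{\infty}\big((0)_{m,\lambda}+(1)_{m,\lambda}+\cdots+(k)_{m,\lambda}\big)x^{k}=\frac{1}{(1-x)^{2}}\sum_{l=0}^{m}S_{1}(m,l)\lambda^{m-l}\,W_{l}\!\left(\frac{x}{1-x}\right).$$
   Context: The $\lambda$-falling factorials are $(x)_{0,\lambda}=1$, $(x)_{m,\lambda}=x(x-\lambda)\cdots(x-(m-1)\lambda)$ for $m\ge1$. The (signed) Stirling numbers of the first kind $S_1(m,l)$ are defined by $(x)_m=\sum_{l=0}^m S_1(m,l)x^l$, where $(x)_m=x(x-1)\cdots(x-m+1)$, $(x)_0=1$. The Stirling numbers of the second kind $S_2(n,k)$ are defined by $x^n=\sum_{k=0}^n S_2(n,k)(x)_k$. The geometric polynomials are $W_{n}(x)=\sum_{k=0}^{n}S_{2}(n,k)\,k!\,x^{k}$. *)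

(* Defs.v *)
From HB Require Import structures.
From mathcomp Require Import all_boot all_order all_algebra.
From mathcomp Require Import all_classical all_reals all_analysis.
Set Implicit Arguments. Unset Strict Implicit. Unset Printing Implicit Defensive.
Import Order.TTheory GRing.Theory Num.Theory.
Local Open Scope ring_scope.

Definition lfall (R : ringType) (x lam : R) (m : nat) : R :=
  \prod_(i < m) (x - i%:R * lam).

Definition S1 (m l : nat) : int :=
  (\prod_(i < m) ('X - (i%:R)%:P) : {poly int})`_l.

Fixpoint S2 (n k : nat) : nat :=
  match n, k with
  | 0, 0 => 1
  | 0, _.+1 => 0
  | _.+1, 0 => 0
  | n'.+1, k'.+1 => (k'.+1 * S2 n' k'.+1 + S2 n' k')%N
  end.

Definition W (R : ringType) (n : nat) (x : R) : R :=
  \sum_(k < n.+1) ((S2 n k * k`!)%N)%:R * x ^+ k.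

(* Main.v *)
Require Import Defs.
From HB Require Import structures.
From mathcomp Require Import all_boot all_order all_algebra.
From mathcomp Require Import all_classical all_reals all_analysis.
From mathcomp Require Import ring lra.
Import Order.TTheory GRing.Theory Num.Theory.
Import numFieldNormedType.Exports.
Local Open Scope classical_set_scope.
Local Open Scope ring_scope.
Lemma bin_le_exp (n k : nat) : ('C(n, k) <= n ^ k)%N.
Proof.
apply: (leq_trans (_ : _ <= 'C(n, k) * k`!)%N).
  by rewrite leq_pmulr // fact_gt0.
rewrite bin_ffact ffact_prod (_ : n ^ k = \prod_(i < k) n)%N; last first.
  by rewrite prod_nat_const card_ord.
by apply: leq_prod => i _; rewrite leq_subr.
Qed.

Lemma pow_harm (R : realType) (k : nat) (s : R) : 0 < s -> s < 1 ->
  exists M : R, forall N : nat, (0 < N)%N ->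
    N%:R ^+ k * s ^+ N <= M * harmonic N.
Proof.
move=> s0 s1.
set c := - ln s.
have c0 : 0 < c by rewrite /c oppr_gt0 ln_lt0 // s0 s1.
set F : R := (k.+1)`!%:R.
set C : R := c ^+ k.+1.
have F0 : 0 < F by rewrite ltr0n fact_gt0.
have C0 : 0 < C by rewrite exprn_gt0.
exists (2 * F / C) => N N0.
set e := expR (N%:R * c).
have sN : s ^+ N = e^-1.
  have sp : s \is Num.pos by rewrite posrE.
  by rewrite /e /c mulrN expRN expRM_natl lnK // invrK.
have e0 : 0 < e by apply: expR_gt0.
have eb : C * N%:R ^+ k * N%:R / F <= e.
  apply: le_trans (expR_ge1Dxn k (_ : 0 <= N%:R * c)); last first.
    by rewrite mulr_ge0 // ltW.
  rewrite /C exprMn exprS -/F. 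
  have : 0 <= (N%:R * (N%:R ^+ k * (c * c ^+ k))) / F :> R.
    by rewrite divr_ge0 ?mulr_ge0 ?exprn_ge0 // ?ltW.
  move=> h.
    rewrite exprS; nra.
have n1 : 1 <= N%:R :> R by rewrite ler1n.
have a0 : 0 <= N%:R ^+ k :> R by rewrite exprn_ge0.
have key : C * N%:R ^+ k * N%:R <= F * e.
  by rewrite -ler_pdivrMl // mulrC.
rewrite sN /harmonic /= ler_pdivrMr // -natr1.
set Z := (X in _ <= X).
have -> : Z = (2 * F * e) / (C * (N%:R + 1)).
  rewrite /Z -natr1; field.
  by apply/andP; split; rewrite gt_eqF // ?ltr_wpDl // ltr01.
rewrite ler_pdivlMr; last by rewrite mulr_gt0 // ltr_wpDl.
have h2 : C * N%:R ^+ k <= C * N%:R ^+ k * N%:R.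
  by rewrite ler_peMr // mulr_ge0 // ltW.
nra.
Qed.

Lemma decay (R : realType) (k : nat) (x : R) : `|x| < 1 ->
  (fun N : nat => 'C(N, k)%:R * x ^+ N) @ \oo --> (0 : R).
Proof.
move=> hx.
set s := (1 + `|x|) / 2.
have s0 : 0 < s by rewrite /s; have := normr_ge0 x; lra.
have s1 : s < 1 by rewrite /s; lra.
have xs : `|x| <= s by rewrite /s; lra.
have [M HM] := @pow_harm R k s s0 s1.
have hM : (fun N : nat => M * harmonic N) @ \oo --> (0 : R).
  by rewrite -(mulr0 M); apply: cvgM; [exact: cvg_cst | exact: cvg_harmonic].
apply: (@squeeze_cvgr _ _ _ _ (fun N => - (M * harmonic N)) (fun N => M * harmonic N)); last 2 first.
- by rewrite -oppr0; apply: cvgN.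
- exact: hM.
near=> N.
have N0 : (0 < N)%N by near: N; exists 1%N.
have B : `|'C(N, k)%:R * x ^+ N| <= M * harmonic N.
  apply: le_trans (HM N N0).
  rewrite normrM normrX ger0_norm ?ler0n //.
  apply: ler_pM; rewrite ?ler0n ?exprn_ge0 //.
    by rewrite -natrX ler_nat bin_le_exp.
  by rewrite lerXn2r // nnegrE ltW.
by rewrite -ler_norml.
Unshelve. all: by end_near.
Qed.

Lemma tele (R : realType) (c e : nat -> R) (x L : R) : x != 1 -> c 0%N = 0 ->
  (forall N, c N.+1 = c N + e N) ->
  series (fun N => e N * x ^+ N) @ \oo --> L ->
  (fun N => c N * x ^+ N) @ \oo --> (0 : R) ->
  series (fun N => c N * x ^+ N) @ \oo --> x * L / (1 - x).
Proof.
move=> x1 c0 cS HE Hc.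
have x1' : 1 - x != 0 by rewrite subr_eq0 eq_sym.
have id n : series (fun N => c N * x ^+ N) n * (1 - x) =
    x * series (fun N => e N * x ^+ N) n - c n * x ^+ n.
  elim: n => [|n IH].
    by rewrite /series /= !big_nil c0; ring.
  rewrite /series /= !big_nat_recr //= mulrDl.
  move: IH; rewrite /series /= => ->.
  rewrite cS exprS; ring.
have -> : series (fun N => c N * x ^+ N) =
    (fun n => (x * series (fun N => e N * x ^+ N) n - c n * x ^+ n) / (1 - x)).
  by apply/funext => n; rewrite -id mulfK.
rewrite -[x * L](subr0).
apply: cvgM; last exact: cvg_cst.
apply: cvgB => //.
by apply: cvgM => //; exact: cvg_cst.
Qed.

Lemma binser (R : realType) (x : R) (k : nat) : `|x| < 1 ->
  series (fun N : nat => 'C(N, k)%:R * x ^+ N) @ \oo --> x ^+ k / (1 - x) ^+ k.+1.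
Proof.
move=> hx.
have x1 : x != 1 by apply/eqP => x1; move: hx; rewrite x1 normr1 ltxx.
have x1' : 1 - x != 0 by rewrite subr_eq0 eq_sym.
elim: k => [|k IH].
  have -> : (fun N : nat => 'C(N, 0)%:R * x ^+ N) = geometric 1 x.
    by apply/funext => N; rewrite /geometric /= bin0 mul1r.
  by rewrite expr0 expr1; apply: cvg_geometric_series.
have := @tele R (fun N => (binomial N k.+1)%:R) (fun N => (binomial N k)%:R) x _ x1 _ _ IH (@decay R k.+1 x hx).
have -> : x * (x ^+ k / (1 - x) ^+ k.+1) / (1 - x) = x ^+ k.+1 / (1 - x) ^+ k.+2.
  rewrite [x ^+ k.+1]exprS [(1 - x) ^+ k.+2]exprS; field.
  by rewrite x1' expf_neq0.
apply => //.
by move=> N; rewrite binS natrD.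
Qed.

Lemma S2_small (l i : nat) : (l < i)%N -> S2 l i = 0%N.
Proof.
elim: l i => [|l IH] [|i] //= hi.
by rewrite (IH i.+1) ?(IH i) // ?muln0 // (ltnW hi).
Qed.

Lemma pow_S2 (j l n : nat) : (l < n)%N ->
  (j ^ l = \sum_(i < n) S2 l i * j ^_ i)%N.
Proof.
elim: l n => [|l IH] n hn.
  case: n hn => // n _; rewrite big_ord_recl /= expn0 muln1.
  by rewrite big1 // => i _; rewrite /=.
case: n hn => // n hn.
rewrite big_ord_recl /= mul0n add0n.
rewrite expnS (IH n) // big_distrr /=.
have E : forall i : 'I_n, (j * (S2 l i * j ^_ i) = S2 l i * j ^_ i.+1 + i * (S2 l i * j ^_ i))%N.
  move=> i; rewrite ffactnSr.
  case: (leqP i j) => hij.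
    by rewrite -{1}(subnK hij); ring.
  by rewrite ffact_small // !muln0 addn0.
rewrite (eq_bigr _ (fun i _ => E i)) big_split /=.
rewrite [in RHS](eq_bigr (fun i : 'I_n => (i.+1 * S2 l i.+1 * j ^_ i.+1 + S2 l i * j ^_ i.+1)%N)); last first.
  by move=> i _; rewrite /bump /= add1n mulnDl.
rewrite big_split /= addnC; congr (_ + _)%N.
clear E; case: n hn => // n hn.
rewrite big_ord_recl big_ord_recr /= (@S2_small l n.+1) // muln0 addn0 mul0n add0n.
by apply: eq_bigr => i _; rewrite /bump /= add1n mulnA.
Qed.

Lemma hockey (N i : nat) : (\sum_(j < N.+1) 'C(j, i) = 'C(N.+1, i.+1))%N.
Proof.
elim: N => [|N IH]; first by rewrite big_ord1 binS bin0n add0n.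
by rewrite big_ord_recr /= IH [in RHS]binS.
Qed.

Lemma lfall_S1 (R : fieldType) (y lam : R) (m : nat) : lam != 0 ->
  lfall y lam m = \sum_(l < m.+1) (S1 m l)%:~R * lam ^+ (m - l) * y ^+ l.
Proof.
move=> l0.
set P := \prod_(i < m) ('X - (i%:R)%:P) : {poly int}.
set Q := \prod_(i < m) ('X - (i%:R : R)%:P).
have HP : map_poly intr P = Q.
  rewrite rmorph_prod; apply: eq_bigr => i _.
  by rewrite rmorphB /= map_polyX map_polyC /= rmorph_nat.
have HQ : size Q = m.+1.
  rewrite /Q -(big_mkord xpredT (fun i => 'X - (i%:R : R)%:P)).
  rewrite /index_iota subn0 -(big_map (fun i => (i%:R : R)) xpredT (fun c => 'X - c%:P)).
  by rewrite size_prod_XsubC size_map size_iota.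
have E1 : lfall y lam m = lam ^+ m * Q.[y / lam].
  rewrite /lfall /Q horner_prod.
  rewrite -[in lam ^+ m](card_ord m) -prodr_const -big_split /=.
  apply: eq_bigr => i _; rewrite hornerXsubC.
  by rewrite mulrBr mulrCA divff // mulr1 mulrC.
rewrite E1 -HP (horner_coef_wide _ (_ : _ <= m.+1)%N); last by rewrite HP HQ.
rewrite mulr_sumr; apply: eq_bigr => l _.
rewrite coef_map /= /S1 -/P.
have hl : (l <= m)%N by rewrite -ltnS.
rewrite expr_div_n mulrCA -[in lam ^+ m](subnK hl) exprD.
rewrite -mulrA; congr (_ * _); field; exact: expf_neq0.
Qed.

Lemma cvg_bigsum (R : realType) (n : nat) (G : 'I_n -> nat -> R) (L : 'I_n -> R) :
  (forall i, G i @ \oo --> L i) ->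
  (fun N => \sum_(i < n) G i N) @ \oo --> \sum_(i < n) L i.
Proof.
elim: n G L => [|n IH] G L HG.
  rewrite big_ord0; under eq_fun do rewrite big_ord0; exact: cvg_cst.
rewrite big_ord_recr /=; under eq_fun do rewrite big_ord_recr /=.
apply: cvgD; last exact: HG.
exact: (IH (fun i => G (widen_ord (leqnSn n) i)) (fun i => L (widen_ord (leqnSn n) i))).
Qed.

Lemma series_lin (R : realType) (n : nat) (c : 'I_n -> R) (g : 'I_n -> nat -> R)
    (H : 'I_n -> R) :
  (forall i, series (g i) @ \oo --> H i) ->
  series (fun N => \sum_(i < n) c i * g i N) @ \oo --> \sum_(i < n) c i * H i.
Proof.
move=> Hg.
have -> : series (fun N => \sum_(i < n) c i * g i N) =
    (fun k => \sum_(i < n) c i * series (g i) k).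
  apply/funext => k; rewrite /series /= exchange_big /=.
  by apply: eq_bigr => i _; rewrite mulr_sumr.
apply: cvg_bigsum => i; apply: cvgM => //; exact: cvg_cst.
Qed.

Lemma binser1 (R : realType) (x : R) (i : nat) : `|x| < 1 ->
  series (fun N : nat => 'C(N.+1, i.+1)%:R * x ^+ N) @ \oo --> x ^+ i / (1 - x) ^+ i.+2.
Proof.
move=> hx.
have x1 : x != 1 by apply/eqP => x1; move: hx; rewrite x1 normr1 ltxx.
have x1' : 1 - x != 0 by rewrite subr_eq0 eq_sym.
have -> : (fun N : nat => 'C(N.+1, i.+1)%:R * x ^+ N) =
   (fun N : nat => 'C(N, i.+1)%:R * x ^+ N) + (fun N : nat => 'C(N, i)%:R * x ^+ N).
  by apply/funext => N /=; rewrite binS natrD mulrDl.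
rewrite seriesD.
have -> : x ^+ i / (1 - x) ^+ i.+2 = x ^+ i.+1 / (1 - x) ^+ i.+2 + x ^+ i / (1 - x) ^+ i.+1.
  rewrite [x ^+ i.+1]exprS [(1 - x) ^+ i.+2]exprS; field.
  by rewrite x1' expf_neq0.
by apply: cvgD; apply: binser.
Qed.

Lemma sum_pow (l N : nat) :
  (\sum_(j < N.+1) j ^ l = \sum_(i < l.+1) S2 l i * i`! * 'C(N.+1, i.+1))%N.
Proof.
rewrite (eq_bigr _ (fun (j : 'I_N.+1) _ => @pow_S2 j l l.+1 (ltnSn l))) exchange_big /=.
apply: eq_bigr => i _; rewrite -hockey big_distrr /=.
by apply: eq_bigr => j _; rewrite -bin_ffact mulnA mulnAC.
Qed.

Theorem theorem7 (R : realType) (lam : R) (hlam : lam != 0) (m : nat)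
    (x : R) (hx : `|x| < 1) :
  series (fun k : nat => (\sum_(j < k.+1) lfall (j%:R : R) lam m) * x ^+ k)
    @ \oo -->
  ((1 - x) ^+ 2)^-1 *
    \sum_(l < m.+1) (S1 m l)%:~R * lam ^+ (m - l) * W l (x / (1 - x)).
Proof.
have x1 : x != 1 by apply/eqP => x1; move: hx; rewrite x1 normr1 ltxx.
have x1' : 1 - x != 0 by rewrite subr_eq0 eq_sym.
have term : forall N : nat, (\sum_(j < N.+1) lfall (j%:R : R) lam m) * x ^+ N =
   \sum_(l < m.+1) ((S1 m l)%:~R * lam ^+ (m - l)) *
     \sum_(i < l.+1) ((S2 l i * i`!)%N)%:R * ('C(N.+1, i.+1)%:R * x ^+ N).
  move=> N.
  rewrite (eq_bigr _ (fun (j : 'I_N.+1) _ => @lfall_S1 R (j%:R : R) lam m hlam)) exchange_big /= mulr_suml.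
  apply: eq_bigr => l _.
  rewrite -mulr_sumr -[_ * _ * x ^+ N]mulrA; congr (_ * _).
  rewrite (eq_bigr (fun j : 'I_N.+1 => ((j : nat) ^ l)%N%:R)); last first.
    by move=> j _; rewrite natrX.
  rewrite -natr_sum sum_pow natr_sum mulr_suml.
  by apply: eq_bigr => i _; rewrite natrM mulrA.
have -> : (fun k : nat => (\sum_(j < k.+1) lfall (j%:R : R) lam m) * x ^+ k) =
  (fun N : nat => \sum_(l < m.+1) ((S1 m l)%:~R * lam ^+ (m - l)) *
     \sum_(i < l.+1) ((S2 l i * i`!)%N)%:R * ('C(N.+1, i.+1)%:R * x ^+ N)).
  by apply/funext => N; exact: term.
set RHS := (X in _ --> X).
have -> : RHS = \sum_(l < m.+1) ((S1 m l)%:~R * lam ^+ (m - l)) *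
     \sum_(i < l.+1) ((S2 l i * i`!)%N)%:R * (x ^+ i / (1 - x) ^+ i.+2).
  rewrite /RHS mulr_sumr; apply: eq_bigr => l _.
  rewrite mulrCA; congr (_ * _).
  rewrite /W mulr_sumr; apply: eq_bigr => i _.
  rewrite mulrCA; congr (_ * _).
  rewrite expr_div_n [(1 - x) ^+ i.+2]exprS [(1 - x) ^+ i.+1]exprS; field.
  by rewrite x1' expf_neq0.
apply: series_lin => l.
apply: (@series_lin R l.+1 (fun i : 'I_l.+1 => ((S2 l i * i`!)%N)%:R) (fun i : 'I_l.+1 => fun N : nat => 'C(N.+1, i.+1)%:R * x ^+ N)) => i.
exact: binser1.
Qed.
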